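(* For all integers $n,k\ge0$, the number of bilateral Dyck paths of semilength $n$ with $k$ up-steps at odd height equals the number of bilateral Dyck paths of semilength $n$ with $k$ peaks.
   Context: A bilateral Dyck path is a lattice path starting at $(0,0)$ with steps $(1,1)$ (up-steps) and $(1,-1)$ (down-steps) ending on the line $y=0$. The semilength is half the number of steps. An up-step is at height $j$ if it goes from $(i-1,j-1)$ to $(i,j)$; it is at odd height if $j$ is odd. A peak is an up-step immediately followed by a down-step. *)

(* Defs.v *)
From mathcomp Require Import all_boot all_algebra.
Set Implicit Arguments. Unset Strict Implicit. Unset Printing Implicit Defensive.
Import GRing.Theory Num.Theory.

(* A lattice path is encoded as a sequence of steps: true = up-step (1,1),
   false = down-step (1,-1). *)

Definition height (p : seq bool) (i : nat) : int :=
  \sum_(j < i) (if nth false p j then 1%:Z else (-1)%R).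

Definition bilateral (p : seq bool) : bool := height p (size p) == 0%R.

(* The step with index i (0-based) goes from x-coordinate i to i+1; if it is an
   up-step its height is the y-coordinate at its end, height p i.+1. *)
Definition odd_up (p : seq bool) (i : nat) : bool :=
  nth false p i && odd `|height p i.+1|%N.

Definition num_odd_up (p : seq bool) : nat :=
  #|[set i : 'I_(size p) | odd_up p i]|.

Definition is_peak (p : seq bool) (i : nat) : bool :=
  nth false p i && (i.+1 < size p) && ~~ nth false p i.+1.

Definition num_peaks (p : seq bool) : nat :=
  #|[set i : 'I_(size p) | is_peak p i]|.

Definition num_paths_odd_up (n k : nat) : nat :=
  #|[set t : (n.*2).-tuple bool | bilateral t && (num_odd_up t == k)]|.

Definition num_paths_peaks (n k : nat) : nat :=
  #|[set t : (n.*2).-tuple bool | bilateral t && (num_peaks t == k)]|.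

(* Main.v *)
Require Import Defs.
From mathcomp Require Import all_boot all_algebra.
From mathcomp Require Import zify ring.
Set Implicit Arguments. Unset Strict Implicit. Unset Printing Implicit Defensive.
Import GRing.Theory Num.Theory.

Lemma card_countT (T : finType) (P : pred T) : #|[set x | P x]| = count P (enum T).
Proof. by rewrite enumT cardsE cardE /enum_mem size_filter. Qed.
Lemma card_ord_count n (P : pred nat) : #|[set i : 'I_n | P i]| = count P (iota 0 n).
Proof. by rewrite card_countT -val_enum_ord count_map. Qed.

Fixpoint aw m : seq (seq bool) :=
  if m is m'.+1 then map (cons true) (aw m') ++ map (cons false) (aw m') else [:: [::]].

Lemma mem_map_cons (c b : bool) s (A : seq (seq bool)) :
  (b :: s \in map (cons c) A) = (b == c) && (s \in A).
Proof.
apply/mapP/andP; first by move=> [x Hx [-> ->]].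
by move=> [/eqP -> Hs]; exists s.
Qed.

Lemma mem_aw m s : (s \in aw m) = (size s == m).
Proof.
elim: m s => [|m IH] s; first by case: s.
case: s => [|b s] /=; first by rewrite mem_cat; apply/negP; case/orP => /mapP [].
by rewrite mem_cat !mem_map_cons IH eqSS; case: b; case: (size s == m).
Qed.

Lemma uniq_aw m : uniq (aw m).
Proof.
elim: m => [|m IH] //=. rewrite cat_uniq !map_inj_uniq //; try by move=> x y [].
rewrite IH andbT; apply/hasPn => x /mapP [y _ ->]; rewrite mem_map_cons. done.
Qed.

Lemma count_aw m (P : pred (seq bool)) : count P (aw m.+1) =
  count (fun s => P (true :: s)) (aw m) + count (fun s => P (false :: s)) (aw m).
Proof. by rewrite /= count_cat !count_map. Qed.

Lemma card_aw m (P : pred (seq bool)) :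
  #|[set t : m.-tuple bool | P t]| = count P (aw m).
Proof.
rewrite card_countT.
rewrite -(count_map val P).
have Hp : perm_eq (map val (enum {: m.-tuple bool})) (aw m).
apply/uniq_perm; first by rewrite map_inj_uniq ?enum_uniq //; exact: val_inj.
  exact: uniq_aw.
move=> s; rewrite mem_aw; apply/mapP/idP.
  by move=> [t _ ->]; rewrite size_tuple.
move=> /eqP Hs; exists (Tuple (introT eqP Hs)); by rewrite ?mem_enum.
by apply/permP.
Qed.

Fixpoint pkc (c : bool) (s : seq bool) : nat :=
  if s is b :: t then (c && ~~ b) + pkc b t else 0.
Fixpoint euc (c : bool) (s : seq bool) : nat :=
  if s is b :: t then (c && b) + euc (~~ c) t else 0.

Lemma iota_count (P : pred nat) n :
  count P (iota 0 n.+1) = P 0 + count (fun i => P i.+1) (iota 0 n).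
Proof. by rewrite /= -[1]addn0 iotaDl count_map. Qed.

Definition hf (s : seq bool) := if s is x :: _ then ~~ x else false.

Lemma pkc_hf b s : pkc b s = (b && hf s) + pkc false s.
Proof. by case: s => [|x s] /=; rewrite ?andbF ?add0n. Qed.

Lemma num_peaks_pkc p : num_peaks p = pkc false p.
Proof.
rewrite /num_peaks (card_ord_count _ (is_peak p)).
elim: p => [|b s IH]; first by [].
rewrite [size _]/=.
rewrite iota_count (@eq_count _ _ (is_peak s)); last by move=> i; rewrite /is_peak.
rewrite IH -[pkc false (b :: s)]/(0 + pkc b s) add0n [pkc b s]pkc_hf; congr (_ + _).
by case: s {IH} => [|x s] //=; rewrite /is_peak /= andbT.
Qed.

Definition sg (b : bool) : int := if b then 1%R else (-1)%R.

Lemma height_cons b s i : height (b :: s) i.+1 = (sg b + height s i)%R.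
Proof. by rewrite /height big_ord_recl /=; congr (_ + _)%R; apply: eq_bigr => j _; rewrite lift0. Qed.

Lemma height_S p i : height p i.+1 = (height p i + sg (nth false p i))%R.
Proof. by rewrite /height big_ord_recr. Qed.

Lemma odd_abs1 (x : int) : odd `|(x + 1)%R|%N = ~~ odd `|x|%N.
Proof.
case: x => n.
  by have -> : (Posz n + 1 = Posz n.+1)%R by rewrite -addn1 PoszD.
rewrite NegzE.
have -> : (- (Posz n.+1) + 1 = - Posz n)%R by rewrite -addn1 PoszD opprD addrK.
by rewrite !abszN /= negbK.
Qed.

Lemma odd_height p i : odd `|height p i|%N = odd i.
Proof.
elim: i => [|i IH]; first by rewrite /height big_ord0.
rewrite height_S /sg; case: (nth false p i); first by rewrite odd_abs1 IH.
have -> : (height p i + -1 = - (- height p i + 1))%R by rewrite opprD opprK.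
by rewrite abszN odd_abs1 abszN IH.
Qed.

Lemma num_odd_up_euc p : num_odd_up p = euc true p.
Proof.
rewrite /num_odd_up (card_ord_count _ (odd_up p)).
have -> : count (odd_up p) (iota 0 (size p)) =
   count (fun i => nth false p i && (odd i == ~~ true)) (iota 0 (size p)).
  by apply: eq_count => i; rewrite /odd_up odd_height /=; case: (odd i).
elim: p true => [|b s IH] c; first by [].
rewrite [size _]/= iota_count -[euc c _]/((c && b) + euc (~~ c) s) -(IH (~~ c)); congr (_ + _).
  by case: c; case: b.
by apply: eq_count => i /=; case: (odd i); case: c.
Qed.

Lemma height_count s : height s (size s) = ((count id s)%:Z - (count negb s)%:Z)%R.
Proof.
elim: s => [|b s IH]; first by rewrite /height big_ord0.
rewrite /= height_cons IH /sg; case: b => /=; lia.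
Qed.

Lemma bilateral_count n s : size s = n.*2 -> bilateral s = (count id s == n).
Proof.
move=> Hs; rewrite /bilateral height_count.
have := count_predC id s; rewrite Hs => H.
have -> : count negb s = count (predC id) s by [].
apply/eqP/eqP; lia.
Qed.

Lemma count_euc c s : count id s = euc c s + euc (~~ c) s.
Proof.
elim: s c => [|b s IH] c //=.
rewrite (IH (~~ c)) negbK; case: b; case: c => /=; lia.
Qed.

Definition ff u d k := 'C(u, k) * 'C(d, k).
Definition ft u d k := match k, d with
  | 0, 0 => 1 | 0, _.+1 => 0 | _.+1, 0 => 0
  | k'.+1, d'.+1 => 'C(u.+1, k) * 'C(d', k') end.
Definition fc (c : bool) := if c then ft else ff.

Lemma count_big m u (X : pred (seq bool)) : m < u ->
  count (fun s => (count id s == u) && X s) (aw m) = 0.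
Proof.
move=> H; apply/eqP; rewrite -leqn0 leqNgt -has_count; apply/hasPn => s.
rewrite mem_aw => /eqP Hs; apply/negP => /andP [/eqP Hc _].
by move: H; rewrite -Hc -Hs ltnNge count_size.
Qed.

Lemma cnt_true c u k m :
  count (fun s => (count id (true :: s) == u) && (pkc c (true :: s) == k)) (aw m) =
  if u is u'.+1 then count (fun s => (count id s == u') && (pkc true s == k)) (aw m) else 0.
Proof.
case: u => [|u].
  by rewrite (@eq_count _ _ pred0) ?count_pred0 // => s.
by apply: eq_count => s; rewrite /= andbF add0n.
Qed.

Lemma cnt_false c u k m :
  count (fun s => (count id (false :: s) == u) && (pkc c (false :: s) == k)) (aw m) =
  if c then (if k is k'.+1 then count (fun s => (count id s == u) && (pkc false s == k')) (aw m) else 0)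
  else count (fun s => (count id s == u) && (pkc false s == k)) (aw m).
Proof.
case: c => /=; last by apply: eq_count => s /=; rewrite !add0n.
case: k => [|k].
  by rewrite (@eq_count _ _ pred0) ?count_pred0 // => s /=; rewrite andbF.
by apply: eq_count => s /=; rewrite add0n.
Qed.

Lemma peaks_count m : forall c u d k, u + d = m ->
  count (fun s => (count id s == u) && (pkc c s == k)) (aw m) = fc c u d k.
Proof.
elim: m => [|m IH] c u d k Hud.
  have [-> ->] : u = 0 /\ d = 0 by lia.
  by case: c; case: k.
rewrite count_aw cnt_true cnt_false.
case: u Hud => [|u]; case: d => [|d] Hud //.
- rewrite add0n; case: c.
    case: k => [|k]; first by [].
    rewrite (IH false 0 d k); last lia.
    by case: k => [|k]; rewrite /ft /ff // !bin0n.
  rewrite (IH false 0 d k); last lia.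
  by rewrite /fc /ff; case: k => [|k]; rewrite ?bin0 ?bin0n.
- rewrite (IH true u 0 k); last lia.
  have Hb : forall k', count (fun s => (count id s == u.+1) && (pkc false s == k')) (aw m) = 0.
    by move=> k'; apply: count_big; lia.
  case: c; case: k => [|k]; rewrite ?Hb ?addn0 //=.
  all: try (rewrite /fc /ff /ft; done).
  by rewrite /ff bin0n muln0.
- rewrite (IH true u d.+1 k); last lia.
  case: c.
    case: k => [|k]; first by rewrite /ft.
    rewrite (IH false u.+1 d k); last lia.
    by rewrite /ft /ff /= [in RHS]binS mulnDl.
  rewrite (IH false u.+1 d k); last lia.
  case: k => [|k]; first by rewrite /fc /ft /ff !bin0.
  by rewrite /fc /ft /ff [in RHS]binS mulnDr addnC.
Qed.

Lemma euc_cons2 c (x y : bool) s : euc c [:: x, y & s] = (if c then x else y) + euc c s.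
Proof. by case: c; case: x; case: y => /=; rewrite ?negbK; lia. Qed.

Lemma addeq (x e a : nat) : (x + e == a) = (x <= a) && (e == a - x).
Proof. case: (leqP x a) => H /=; [apply/eqP/eqP | apply/eqP]; lia. Qed.

Definition Gc m a b := count (fun s => (euc true s == a) && (euc false s == b)) (aw m).

Lemma Gshift m (x y : bool) a b :
  count (fun s => (x + euc true s == a) && (y + euc false s == b)) (aw m) =
  if (x <= a) && (y <= b) then Gc m (a - x) (b - y) else 0.
Proof.
case: ifP => H.
  by apply: eq_count => s; rewrite !addeq; case/andP: H => -> ->.
rewrite (@eq_count _ _ pred0) ?count_pred0 // => s /=; rewrite !addeq.
by case: (x <= a) H; case: (y <= b) => //= _; rewrite andbF.
Qed.

Lemma odd_count m : forall a b, Gc m.*2 a b = 'C(m, a) * 'C(m, b).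
Proof.
elim: m => [|m IH] a b.
  by rewrite /Gc /=; case: a; case: b.
have E : forall x y : bool, count (fun s => (euc true [:: x, y & s] == a) &&
    (euc false [:: x, y & s] == b)) (aw m.*2) =
    count (fun s => (x + euc true s == a) && (y + euc false s == b)) (aw m.*2).
  by move=> x y; apply: eq_count => s; rewrite !euc_cons2.
rewrite /Gc doubleS !count_aw !E !Gshift.
rewrite -!/(Gc _ _ _) !IH {E}.
case: a => [|a]; case: b => [|b]; rewrite /= ?subn0 ?subn1 /= ?bin0 ?binS; ring.
Qed.

Theorem corollary2 (n k : nat) : num_paths_odd_up n k = num_paths_peaks n k.
Proof.
rewrite /num_paths_odd_up /num_paths_peaks.
rewrite (card_aw _ (fun s => bilateral s && (num_odd_up s == k))).
rewrite (card_aw _ (fun s => bilateral s && (num_peaks s == k))).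
symmetry.
rewrite (@eq_in_count _ _ (fun s => (count id s == n) && (pkc false s == k))); last first.
  by move=> s; rewrite mem_aw => /eqP Hs /=; rewrite (bilateral_count Hs) num_peaks_pkc.
rewrite (peaks_count false (u := n) (d := n)); last by rewrite addnn.
rewrite /= /ff.
case: (leqP k n) => Hk; last first.
  rewrite bin_small // muln0.
  rewrite (@eq_in_count _ _ pred0) ?count_pred0 // => s; rewrite mem_aw => /eqP Hs /=.
  rewrite (bilateral_count Hs) num_odd_up_euc (count_euc true) /=.
  apply/negP => /andP [/eqP H1 /eqP H2]; lia.
rewrite -{2}(bin_sub Hk) -odd_count /Gc.
apply: eq_in_count => s; rewrite mem_aw => /eqP Hs /=.
rewrite (bilateral_count Hs) num_odd_up_euc (count_euc true) /=.
apply/andP/andP => [[/eqP H1 /eqP H2]|[/eqP H1 /eqP H2]]; split; apply/eqP; lia.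
Qed.
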